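(* (i) For every $\epsilon\in\mathbb{C}$ and every $k\in\mathbb{N}_0$, $E_{2k+1}^{(2\epsilon)}(\epsilon)=0$. (ii) For every real number $r$, the Maclaurin expansion of $(\cos z)^r$ about $z=0$ is \[ (\cos z)^r=\sum_{k=0}^{\infty}(-1)^kE_{2k}^{(-r)}\biggl(-\frac{r}{2}\biggr)\frac{(2z)^{2k}}{(2k)!}. \]
   Context: For $\sigma\in\mathbb{C}$, the generalized Euler polynomials $E_k^{(\sigma)}(x)$ are defined by the generating function $\bigl(\frac{2}{e^z+1}\bigr)^\sigma e^{xz}=\sum_{k=0}^{\infty}E_k^{(\sigma)}(x)\frac{z^k}{k!}$ for $|z|<\pi$, where the power is the branch equal to $1$ at $z=0$. Likewise $(\cos z)^r$ denotes the branch that equals $1$ at $z=0$ (analytic near $0$). *)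

(* Defs.v *)
From Stdlib Require Import Reals Factorial.
From Coquelicot Require Import Coquelicot.
Open Scope C_scope.

Definition Cexp (z : C) : C :=
  (exp (fst z) * cos (snd z), exp (fst z) * sin (snd z))%R.

(* principal logarithm, valid (and used only) on the right half plane Re w > 0,
   where Log w = ln|w| + i Arg w with Arg w = atan (Im w / Re w). *)
Definition Clog_rhp (w : C) : C := (ln (Cmod w), atan (snd w / fst w))%R.

Definition Cpowc (w s : C) : C := Cexp (s * Clog_rhp w).

Definition Ccos (z : C) : C := (Cexp (Ci * z) + Cexp (- (Ci * z))) / 2.

Definition euler_gen (sigma x z : C) : C :=
  Cpowc (2 / (Cexp z + 1)) sigma * Cexp (x * z).

(* E is the family of generalized Euler polynomials E k sigma x = E_k^(sigma)(x):
   for every sigma, x the series sum_k E_k^(sigma)(x) z^k / k! converges to the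
   generating function for all z in some neighbourhood of 0 (this determines
   the coefficients uniquely). *)
Definition is_gen_Euler (E : nat -> C -> C -> C) : Prop :=
  forall sigma x : C, exists delta : R, (0 < delta)%R /\
    forall z : C, (Cmod z < delta)%R ->
      is_series (fun k => E k sigma x * z ^ k / RtoC (INR (Factorial.fact k)))
                (euler_gen sigma x z).

(* Main.v *)
Require Import Defs.
From Stdlib Require Import Reals Factorial Lra Lia.
From Coquelicot Require Import Coquelicot.
Open Scope C_scope.

Lemma Ceq (a b : C) : fst a = fst b -> snd a = snd b -> a = b.
Proof. destruct a, b; simpl; intros; subst; auto. Qed.

Lemma Cexp_add a b : Cexp (a + b) = Cexp a * Cexp b.
Proof.
  destruct a as [x y], b as [u v]. unfold Cexp, Cmult, Cplus; simpl.
  rewrite exp_plus, cos_plus, sin_plus. apply Ceq; simpl; ring.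
Qed.

Lemma Cexp_0 : Cexp 0 = 1.
Proof. unfold Cexp; simpl. rewrite exp_0, cos_0, sin_0. apply Ceq; simpl; ring. Qed.

Lemma Cexp_neq0 a : Cexp a <> 0.
Proof.
  destruct a as [x y]. unfold Cexp; simpl. intro H. injection H as H1 H2.
  pose proof (exp_pos x). pose proof (sin2_cos2 y). unfold Rsqr in *.
  apply Rmult_integral in H1; apply Rmult_integral in H2.
  destruct H1 as [H1|H1]; [lra|]. destruct H2 as [H2|H2]; [lra|].
  rewrite H1, H2 in *. lra.
Qed.

Lemma Cmod_polar (r p : R) : 0 < r -> Cmod (r * cos p, r * sin p)%R = r.
Proof.
  intro Hr. unfold Cmod; simpl.
  replace ((r * cos p) * ((r * cos p) * 1) + (r * sin p) * ((r * sin p) * 1))%R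
    with (r * r * (sin p ^ 2 + cos p ^ 2))%R by ring.
  rewrite <- !Rsqr_pow2, sin2_cos2, Rmult_1_r. apply sqrt_square. lra.
Qed.

Lemma Clog_polar (r p : R) : 0 < r -> -(PI/2) < p < PI/2 ->
  Clog_rhp (r * cos p, r * sin p)%R = (ln r, p).
Proof.
  intros Hr Hp. unfold Clog_rhp. rewrite Cmod_polar by auto. simpl.
  assert (0 < cos p) by (apply cos_gt_0; lra).
  replace (r * sin p / (r * cos p))%R with (tan p).
  - rewrite atan_tan by lra. reflexivity.
  - unfold tan. field. split; lra.
Qed.

Lemma polar_form (a b : R) : 0 < a ->
  (a, b) = (a * sqrt (1 + (b/a)²) * cos (atan (b/a)), a * sqrt (1 + (b/a)²) * sin (atan (b/a)))%R
  /\ 0 < a * sqrt (1 + (b/a)²).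
Proof.
  intro Ha. assert (Hs : 0 < sqrt (1 + (b/a)²)).
  { apply sqrt_lt_R0. pose proof (Rle_0_sqr (b/a)). lra. }
  split.
  - rewrite cos_atan, sin_atan. apply Ceq; simpl; field; lra.
  - apply Rmult_lt_0_compat; auto.
Qed.

Lemma polar_mul_exp (r p x y : R) :
  ((r * cos p, r * sin p)%R : C) * Cexp (x, y) =
  (r * exp x * cos (p + y), r * exp x * sin (p + y))%R.
Proof. unfold Cexp, Cmult; simpl. rewrite cos_plus, sin_plus. apply Ceq; simpl; ring. Qed.

Lemma polar_inv (r p : R) : 0 < r ->
  / ((r * cos p, r * sin p)%R : C) = (/ r * cos (- p), / r * sin (- p))%R.
Proof.
  intro Hr. rewrite cos_neg, sin_neg. unfold Cinv; simpl.
  assert (E : (r * cos p * (r * cos p * 1) + r * sin p * (r * sin p * 1) = r * r)%R).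
  { pose proof (sin2_cos2 p). unfold Rsqr in *. nra. }
  rewrite E. apply Ceq; simpl; field; lra.
Qed.

Lemma atan_bound_le (t u : R) : Rabs t <= 1 -> -(PI/2) < u < PI/2 ->
  Rabs (atan (t * tan u)) <= Rabs u.
Proof.
  intros Ht Hu.
  assert (Hmono : forall a b, a <= b -> atan a <= atan b).
  { intros a b [H|H]. left; apply atan_increasing; auto. subst; lra. }
  destruct (Rle_or_lt 0 u) as [H0|H0].
  - assert (0 <= tan u).
    { destruct H0 as [H0|H0]. left. apply tan_gt_0; lra. subst; rewrite tan_0; lra. }
    assert (-tan u <= t * tan u <= tan u).
    { apply Rabs_le_between in Ht. split; nra. }
    pose proof (Hmono _ _ (proj1 H1)). pose proof (Hmono _ _ (proj2 H1)).
    rewrite atan_opp, atan_tan in * by lra.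
    rewrite (Rabs_pos_eq u) by lra. apply Rabs_le. lra.
  - assert (tan u < 0).
    { rewrite <- (Ropp_involutive u), tan_neg. assert (0 < tan (-u)) by (apply tan_gt_0; lra). lra. }
    assert (tan u <= t * tan u <= - tan u).
    { apply Rabs_le_between in Ht. split; nra. }
    pose proof (Hmono _ _ (proj1 H1)). pose proof (Hmono _ _ (proj2 H1)).
    rewrite atan_opp, atan_tan in * by lra.
    rewrite (Rabs_left u) by lra. apply Rabs_le. lra.
Qed.

Definition Hc (w : C) : C := (Cexp (w / 2) + Cexp (- (w / 2))) / 2.

Lemma half_C (x y : R) : ((x, y) : C) / 2 = (x / 2, y / 2)%R.
Proof. unfold Cdiv, Cinv, Cmult; simpl. apply Ceq; simpl; field. Qed.

Lemma Hc_form (x y : R) : Hc (x, y) =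
  ((exp (x/2) + exp (-(x/2))) / 2 * cos (y/2), (exp (x/2) - exp (-(x/2))) / 2 * sin (y/2))%R.
Proof.
  unfold Hc. rewrite half_C. unfold Cexp, Copp, Cplus, Cdiv, Cinv, Cmult; simpl.
  rewrite cos_neg, sin_neg. apply Ceq; simpl; field.
Qed.

Lemma gen_alg (w : C) : Hc w <> 0 -> 2 / (Cexp w + 1) = / Hc w * Cexp (- (w / 2)).
Proof.
  intro HH. unfold Hc in *.
  assert (E1 : Cexp w = Cexp (w/2) * Cexp (w/2)).
  { rewrite <- Cexp_add. f_equal. field. }
  assert (E2 : Cexp (w/2) * Cexp (-(w/2)) = 1).
  { rewrite <- Cexp_add, <- Cexp_0. f_equal. ring. }
  pose proof (Cexp_neq0 (w/2)) as Hp.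
  set (p := Cexp (w/2)) in *. set (q := Cexp (-(w/2))) in *.
  assert (Hpq : p + q <> 0). { intro E. apply HH. rewrite E. field. }
  rewrite E1, <- E2. replace (p * p + p * q) with (p * (p + q)) by ring.
  transitivity (2 / (p * (p + q)) * (p * q)). { rewrite E2. ring. } clearbody p q. field. split; auto.
Qed.

Lemma Hc_polar (x y : R) : Rabs y < 1 -> exists rho th,
  0 < rho /\ Rabs th <= Rabs (y/2) /\ Hc (x, y) = (rho * cos th, rho * sin th)%R.
Proof.
  intro Hy. pose proof PI2_1.
  set (c := ((exp (x/2) + exp (-(x/2))) / 2)%R).
  set (s := ((exp (x/2) - exp (-(x/2))) / 2)%R).
  assert (Hc0 : 0 < c) by (unfold c; pose proof (exp_pos (x/2)); pose proof (exp_pos (-(x/2))); lra).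
  assert (Hsc : Rabs (s / c) <= 1).
  { pose proof (exp_pos (x/2)); pose proof (exp_pos (-(x/2))).
    apply Rabs_le; split.
    - apply Rmult_le_reg_r with c; auto. unfold Rdiv. rewrite Rmult_assoc, Rinv_l by lra.
      unfold s, c; lra.
    - apply Rmult_le_reg_r with c; auto. unfold Rdiv. rewrite Rmult_assoc, Rinv_l by lra.
      unfold s, c; lra. }
  apply Rabs_def2 in Hy. destruct Hy as [Hy1 Hy2].
  assert (Hcos : 0 < cos (y/2)) by (apply cos_gt_0; lra).
  destruct (polar_form (c * cos (y/2)) (s * sin (y/2))) as [E Hr].
  { apply Rmult_lt_0_compat; auto. }
  exists (c * cos (y / 2) * sqrt (1 + (s * sin (y / 2) / (c * cos (y / 2)))²))%R, (atan (s * sin (y / 2) / (c * cos (y / 2)))). split; [exact Hr|split].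
  - replace (s * sin (y / 2) / (c * cos (y / 2)))%R with (s / c * tan (y/2))%R.
    + apply (atan_bound_le (s / c) (y / 2)); auto. split; lra.
    + unfold tan. field. split; lra.
  - rewrite Hc_form. fold c s. exact E.
Qed.

Lemma key (sg x0 : C) (x y : R) : sg = 2 * x0 -> Rabs y < 1 ->
  euler_gen sg x0 (x, y) = Cexp (- sg * Clog_rhp (Hc (x, y))).
Proof.
  intros Hs Hy. pose proof PI2_1.
  destruct (Hc_polar x y Hy) as (rho & th & Hr & Hth & E).
  assert (Hy' := Hy). apply Rabs_def2 in Hy'.
  rewrite Rabs_div in Hth by lra. rewrite (Rabs_pos_eq 2) in Hth by lra.
  apply Rabs_le_between in Hth.
  assert (Hy2 : Rabs y / 2 < 1/2) by lra.
  assert (HH : Hc (x, y) <> 0).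
  { rewrite E. intro F. injection F as F1 F2.
    assert (0 < cos th) by (apply cos_gt_0; lra). nra. }
  unfold euler_gen, Cpowc. rewrite gen_alg by auto.
  rewrite E, polar_inv by auto. rewrite half_C. unfold Copp at 1; simpl fst; simpl snd.
  rewrite polar_mul_exp.
  pose proof (Rabs_pos y).
  assert (Hb : Rabs y < PI/2 /\ -(PI/2) < th < PI/2 /\ -(PI/2) < - th + - (y/2) < PI/2).
  { destruct (Rle_or_lt 0 y) as [Hy0|Hy0];
       [rewrite Rabs_pos_eq in * by lra | rewrite Rabs_left in * by lra]; lra. }
  rewrite Clog_polar.
  2: { apply Rmult_lt_0_compat. apply Rinv_0_lt_compat; auto. apply exp_pos. }
  2: { lra. }
  rewrite Clog_polar by (auto; lra).
  rewrite <- Cexp_add. f_equal.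
  rewrite ln_mult, ln_Rinv, ln_exp by (auto; apply Rinv_0_lt_compat || apply exp_pos; auto).
  replace ((- ln rho + - (x / 2))%R, (- th + - (y / 2))%R) with
    (- ((ln rho, th) : C) - ((x, y) : C) / 2).
  2: { rewrite half_C. apply Ceq; simpl; ring. }
  rewrite Hs. field.
Qed.

Lemma sum_n_fst (a : nat -> C) n : fst (sum_n a n) = sum_n (fun k => fst (a k)) n.
Proof.
  induction n.
  - rewrite !sum_O. reflexivity.
  - rewrite !sum_Sn. rewrite <- IHn. reflexivity.
Qed.

Lemma sum_n_snd (a : nat -> C) n : snd (sum_n a n) = sum_n (fun k => snd (a k)) n.
Proof.
  induction n.
  - rewrite !sum_O. reflexivity.
  - rewrite !sum_Sn. rewrite <- IHn. reflexivity.
Qed.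

Lemma is_series_fst (a : nat -> C) l :
  is_series a l -> is_series (fun n => fst (a n)) (fst l).
Proof.
  unfold is_series. intro H.
  apply filterlim_locally. intro eps.
  pose proof (proj1 (filterlim_locally (F := eventually) _ _) H eps) as H0. clear H. rename H0 into H.
  destruct H as [N HN]. exists N. intros n Hn. specialize (HN n Hn).
  rewrite <- sum_n_fst. destruct HN as [H1 H2]. exact H1.
Qed.

Lemma is_series_snd (a : nat -> C) l :
  is_series a l -> is_series (fun n => snd (a n)) (snd l).
Proof.
  unfold is_series. intro H.
  apply filterlim_locally. intro eps.
  pose proof (proj1 (filterlim_locally (F := eventually) _ _) H eps) as H0. clear H. rename H0 into H.
  destruct H as [N HN]. exists N. intros n Hn. specialize (HN n Hn).
  rewrite <- sum_n_snd. destruct HN as [H1 H2]. exact H2.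
Qed.

Lemma R_pseries_zero (b : nat -> R) (d : R) : 0 < d ->
  (forall t : R, Rabs t < d -> is_series (fun k => (b k * t ^ k)%R) 0%R) ->
  forall k, b k = 0%R.
Proof.
  intros Hd H k.
  assert (Hrad : Rbar_lt 0 (CV_radius b)).
  { assert (Hb : exists M, forall n, Rabs (b n * (d/2) ^ n) <= M).
    { assert (Hs : ex_series (fun n => (b n * (d/2) ^ n)%R)).
      { eexists. apply H. rewrite Rabs_pos_eq by lra. lra. }
      apply ex_series_lim_0 in Hs. apply is_lim_seq_abs in Hs.
      simpl in Hs. rewrite Rabs_R0 in Hs.
      apply is_lim_seq_Reals in Hs.
      destruct (cauchy_bound _ (CV_Cauchy _ (exist _ 0%R Hs))) as [M HM].
      exists M. intro n. apply HM. exists n. reflexivity. }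
    destruct (CV_radius_bounded b) as [Hub _].
    specialize (Hub (d/2)%R Hb).
    eapply Rbar_lt_le_trans; [|exact Hub]. simpl. lra. }
  change 0%R with ((fun _ : nat => 0%R) k).
  apply PSeries_ext_recip.
  - exact Hrad.
  - rewrite CV_radius_const_0. simpl. auto.
  - exists (mkposreal d Hd). intros y Hy. rewrite PSeries_const_0.
    apply is_pseries_unique. apply is_pseries_R. apply H.
    unfold ball in Hy; simpl in Hy. unfold AbsRing_ball, abs, minus, plus, opp in Hy; simpl in Hy.
    change (Rabs (y + - 0) < d)%R in Hy. rewrite Ropp_0, Rplus_0_r in Hy. exact Hy.
Qed.

Lemma C_pseries_zero (c : nat -> C) (d : R) : 0 < d ->
  (forall t : R, Rabs t < d -> is_series (fun k => c k * RtoC t ^ k) (RtoC 0)) ->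
  forall k, c k = 0.
Proof.
  intros Hd H k. destruct (c k) as [u v] eqn:Ec.
  assert (Hu : forall k, fst (c k) = 0%R).
  { apply R_pseries_zero with d; auto. intros t Ht.
    specialize (H t Ht). apply is_series_fst in H. simpl in H.
    eapply is_series_ext; [|exact H]. intro n. simpl.
    rewrite <- RtoC_pow. simpl. ring. }
  assert (Hv : forall k, snd (c k) = 0%R).
  { apply R_pseries_zero with d; auto. intros t Ht.
    specialize (H t Ht). apply is_series_snd in H. simpl in H.
    eapply is_series_ext; [|exact H]. intro n. simpl.
    rewrite <- RtoC_pow. simpl. ring. }
  specialize (Hu k); specialize (Hv k). rewrite Ec in Hu, Hv. simpl in Hu, Hv. subst. reflexivity.
Qed.

Lemma is_series_even (a : nat -> C) (l : C) :
  (forall k, a (2 * k + 1)%nat = 0) -> is_series a l ->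
  is_series (fun k => a (2 * k)%nat) l.
Proof.
  intros H0 H.
  assert (PZ : forall x : C, plus x (RtoC 0) = x) by (intro; apply Cplus_0_r).
  assert (E : forall n, sum_n (fun k => a (2 * k)%nat) n = sum_n a (2 * n + 1)%nat).
  { induction n.
    - rewrite sum_O. simpl. rewrite sum_Sn, sum_O. pose proof (H0 0%nat) as Z; simpl in Z; rewrite Z.
      rewrite PZ. reflexivity.
    - rewrite sum_Sn, IHn.
      replace (2 * S n + 1)%nat with (S (S (2 * n + 1))) by lia.
      rewrite !sum_Sn. replace (S (S (2 * n + 1))) with (2 * S n + 1)%nat by lia.
      rewrite H0, PZ. f_equal. f_equal. lia. }
  unfold is_series.
  apply filterlim_ext with (f := fun n => sum_n a (2 * n + 1)%nat).
  { intro n. rewrite E. reflexivity. }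
  apply filterlim_comp with (G := eventually) (f := fun n => (2 * n + 1)%nat); [|exact H].
  intros P [N HN]. exists N. intros n Hn. apply HN. lia.
Qed.

Lemma CS (c : C) n : c ^ (S n) = c * c ^ n.
Proof. reflexivity. Qed.

Lemma RtoC_fact_neq0 k : RtoC (INR (fact k)) <> 0.
Proof. intro H. injection H as H. apply (INR_fact_neq_0 k). exact H. Qed.

Lemma m1_pow_even k : (-1) ^ (2 * k) = 1.
Proof.
  induction k. reflexivity.
  replace (2 * S k)%nat with (S (S (2 * k))) by lia. rewrite !CS. rewrite IHk. ring.
Qed.

Lemma RtoC_opp_pow (t : R) k : RtoC (- t) ^ k = (-1) ^ k * RtoC t ^ k.
Proof.
  induction k. simpl. ring.
  rewrite !CS. rewrite IHk. replace (RtoC (-t)) with (-1 * RtoC t) by (apply Ceq; simpl; ring). ring.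
Qed.

Lemma Ci_pow (u : C) k : (Ci * u) ^ (2 * k) = (-1) ^ k * u ^ (2 * k).
Proof.
  induction k. simpl. ring.
  replace (2 * S k)%nat with (S (S (2 * k))) by lia. rewrite !CS.
  assert (HC : Ci * Ci = -1) by (apply Ceq; simpl; ring).
  transitivity ((Ci * Ci) * (u * u) * (Ci * u) ^ (2 * k)); [ring|].
  rewrite IHk, HC. ring.
Qed.

Lemma Hc_even (t : R) : Hc (- t, 0)%R = Hc (t, 0)%R.
Proof.
  rewrite !Hc_form. replace (0/2)%R with 0%R by field. rewrite sin_0.
  replace (- t / 2)%R with (- (t/2))%R by field. rewrite Ropp_involutive.
  apply Ceq; simpl; [rewrite (Rplus_comm (exp (- (t/2)))); reflexivity | rewrite !Rmult_0_r; reflexivity].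
Qed.

Lemma part1 (E : nat -> C -> C -> C) (hE : is_gen_Euler E) :
  forall (eps : C) (k : nat), E (2 * k + 1)%nat (2 * eps) eps = 0.
Proof.
  intros eps.
  destruct (hE (2 * eps) eps) as [d [Hd Hs]].
  set (c := fun k => E k (2 * eps) eps * (1 - (-1) ^ k) / RtoC (INR (fact k))).
  assert (Hc0 : forall k, c k = 0).
  { apply C_pseries_zero with (Rmin d 1).
    { apply Rmin_glb_lt; lra. }
    intros t Ht.
    assert (Ht1 : Rabs t < d) by (eapply Rlt_le_trans; [exact Ht| apply Rmin_l]).
    assert (Ht2 : Rabs t < 1) by (eapply Rlt_le_trans; [exact Ht| apply Rmin_r]).
    assert (S1 := Hs (RtoC t) ltac:(rewrite Cmod_R; exact Ht1)).
    assert (S2 := Hs (RtoC (- t)) ltac:(rewrite Cmod_R, Rabs_Ropp; exact Ht1)).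
    assert (Ef : euler_gen (2 * eps) eps (RtoC (- t)) = euler_gen (2 * eps) eps (RtoC t)).
    { unfold RtoC. rewrite !key by (auto; rewrite Rabs_R0; lra). rewrite Hc_even. reflexivity. }
    rewrite Ef in S2.
    pose proof (is_series_minus _ _ _ _ S1 S2) as S3.
    match type of S3 with is_series _ ?L => replace L with (RtoC 0) in S3 by (symmetry; apply Cplus_opp_r) end.
    eapply is_series_ext; [|exact S3].
    intro n. simpl. change (plus ?a (opp ?b)) with (a - b).
    unfold c. rewrite RtoC_opp_pow. field. apply RtoC_fact_neq0. }
  intro k. specialize (Hc0 (2 * k + 1)%nat). unfold c in Hc0.
  replace (2 * k + 1)%nat with (S (2 * k)) in * by lia.
  rewrite CS, m1_pow_even in Hc0.
  pose proof (RtoC_fact_neq0 (S (2 * k))).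
  assert (H2 : E (S (2 * k)) (2 * eps) eps = E (S (2 * k)) (2 * eps) eps * (1 - -1 * 1) / RtoC (INR (fact (S (2 * k)))) * RtoC (INR (fact (S (2 * k)))) / 2).
  { field; repeat split; try assumption; intro F; injection F as F; lra. }
  rewrite H2, Hc0. field; repeat split; try assumption; intro F; injection F as F; lra.
Qed.

Lemma Hc_cos (z : C) : Hc (2 * Ci * z) = Ccos z.
Proof. unfold Hc, Ccos. replace (2 * Ci * z / 2) with (Ci * z) by field. reflexivity. Qed.

Theorem mainTheorem3 (E : nat -> C -> C -> C) (hE : is_gen_Euler E) :
  (forall (eps : C) (k : nat), E (2 * k + 1)%nat (2 * eps) eps = 0) /\
  (forall r : R, exists delta : R, (0 < delta)%R /\
     forall z : C, (Cmod z < delta)%R ->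
       is_series
         (fun k => (-1) ^ k * E (2 * k)%nat (- RtoC r) (- RtoC r / 2)
                   * (2 * z) ^ (2 * k) / RtoC (INR (Factorial.fact (2 * k))))
         (Cpowc (Ccos z) (RtoC r))).
Proof.
  split; [exact (part1 E hE)|].
  intro r.
  assert (Hsg : - RtoC r = 2 * (- RtoC r / 2)) by field.
  assert (Hodd : forall k, E (2 * k + 1)%nat (- RtoC r) (- RtoC r / 2) = 0).
  { intro k. pose proof (part1 E hE (- RtoC r / 2) k) as H. rewrite <- Hsg in H. exact H. }
  destruct (hE (- RtoC r) (- RtoC r / 2)) as [d [Hd Hs]].
  exists (Rmin (d / 2) (1 / 2)). split; [apply Rmin_glb_lt; lra|].
  intros z Hz.
  assert (Hz1 : Cmod z < d / 2) by (eapply Rlt_le_trans; [exact Hz| apply Rmin_l]).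
  assert (Hz2 : Cmod z < 1 / 2) by (eapply Rlt_le_trans; [exact Hz| apply Rmin_r]).
  assert (Hw : Cmod (2 * Ci * z) < d).
  { rewrite !Cmod_mult, Cmod_Ci, Cmod_R, Rabs_pos_eq by lra. lra. }
  specialize (Hs _ Hw).
  apply is_series_even in Hs.
  2: { intro k. rewrite Hodd. unfold Cdiv. ring. }
  assert (EL : euler_gen (- RtoC r) (- RtoC r / 2) (2 * Ci * z) = Cpowc (Ccos z) (RtoC r)).
  { destruct z as [x y].
    assert (Ew : 2 * Ci * (x, y) = ((- (2 * y))%R, (2 * x)%R)) by (apply Ceq; simpl; ring).
    pose proof (Rmax_Cmod (x, y)) as HM. simpl in HM.
    assert (Hx : Rabs x < 1/2) by (eapply Rle_lt_trans; [eapply Rle_trans; [apply Rmax_l|exact HM]|exact Hz2]).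
    assert (Hb : Rabs (2 * x) < 1) by (rewrite Rabs_mult, Rabs_pos_eq by lra; lra).
    rewrite Ew, (key _ _ _ _ Hsg Hb), <- Ew, Hc_cos. unfold Cpowc. f_equal. ring. }
  rewrite <- EL.
  eapply is_series_ext; [|exact Hs].
  intro n.
  cbv beta. replace (2 * Ci * z) with (Ci * (2 * z)) by ring. rewrite Ci_pow. match goal with |- ?a = ?b => change (@eq C a b) end. unfold Cdiv. ring.
Qed.
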